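(* Let $\Lambda$ be a basic finite-dimensional $\tau$-tilting finite algebra over a field $K$. For $\mathcal{T}\in\mathrm{tors}\,\Lambda$, the following are equivalent: (1) there exists a projective module $P$ with $\mathcal{T}=\mathrm{Gen}(P)$; (2) there exists a set $\mathcal{A}$ of atoms of $\mathrm{tors}\,\Lambda$ such that $\mathcal{T}$ is the maximal element of $\mathrm{tors}\,\Lambda$ lying weakly above all atoms in $\mathcal{A}$ and not weakly above any atom outside $\mathcal{A}$; (3) there exists a set $\mathcal{S}$ of simple modules such that $\mathcal{T}$ is the largest torsion class containing all modules of $\mathcal{S}$ and containing no simple module outside $\mathcal{S}$. When these hold, $\mathcal{S}$ is the top of $P$ (equivalently, $P$ is the projective cover of $\mathcal{S}$); in particular, $P=0$ if and only if $\mathcal{A}=\emptyset=\mathcal{S}$.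
   Context: $\mathrm{mod}\,\Lambda$: finitely generated right $\Lambda$-modules; $\mathrm{tors}\,\Lambda$: finite lattice of torsion classes (subcategories closed under extensions and quotients) ordered by inclusion; its atoms are the torsion classes covering $0$. $\mathrm{Gen}(P)$: quotients of finite direct sums of copies of $P$. A set of modules is identified with their direct sum. *)

(* Defs.v *)
From HB Require Import structures.
From mathcomp Require Import all_boot all_order all_algebra all_field.
Set Implicit Arguments.
Unset Strict Implicit.
Unset Printing Implicit Defensive.
Import GRing.Theory.
Local Open Scope ring_scope.

Section RightModules.
Variables (K : fieldType) (L : falgType K).

(* A (finite-dimensional = finitely generated) right L-module: the space of
   row vectors K^rdim, with v . a := v *m ract a. *)
Record rmod := RMod { rdim : nat; ract : L -> 'M[K]_rdim }.

Definition is_rmod (M : rmod) : Prop :=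
  [/\ forall (k : K) (a b : L), ract M (k *: a + b) = k *: ract M a + ract M b,
      ract M 1 = 1%:M
    & forall a b : L, ract M (a * b) = ract M a *m ract M b].

Definition is_hom (M N : rmod) (f : 'M[K]_(rdim M, rdim N)) : Prop :=
  forall a : L, ract M a *m f = f *m ract N a.

Definition iso (M N : rmod) : Prop :=
  exists f : 'M[K]_(rdim M, rdim N), [/\ is_hom f, row_free f & row_full f].

Definition exact_seq (X Y Z : rmod) (f : 'M[K]_(rdim X, rdim Y))
  (g : 'M[K]_(rdim Y, rdim Z)) : Prop :=
  [/\ is_hom f, is_hom g, row_free f, row_full g & (f == kermx g)%MS].

(* torsion classes: full subcategories of mod L containing 0, closed under
   quotients (hence under isomorphisms) and extensions *)
Definition is_tors (T : rmod -> Prop) : Prop :=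
  [/\ forall M, is_rmod M -> rdim M = 0%N -> T M,
      forall (M N : rmod) (f : 'M[K]_(rdim M, rdim N)),
        is_rmod M -> is_rmod N -> T M -> is_hom f -> row_full f -> T N
    & forall (X Y Z : rmod) f g, is_rmod X -> is_rmod Y -> is_rmod Z ->
        T X -> T Z -> @exact_seq X Y Z f g -> T Y].

Definition subcat (T U : rmod -> Prop) : Prop :=
  forall M, is_rmod M -> T M -> U M.
Definition cat_eq (T U : rmod -> Prop) : Prop := subcat T U /\ subcat U T.

Definition zero_cat (T : rmod -> Prop) : Prop :=
  forall M, is_rmod M -> T M -> rdim M = 0%N.

Definition is_atom (A : rmod -> Prop) : Prop :=
  [/\ is_tors A, ~ zero_cat A
    & forall T, is_tors T -> subcat T A -> zero_cat T \/ subcat A T].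

Definition zero_mod : rmod := @RMod 0 (fun _ => 0).
Definition dsum (M N : rmod) : rmod :=
  @RMod (rdim M + rdim N) (fun a => block_mx (ract M a) 0 0 (ract N a)).
Definition dsum_list (s : seq rmod) : rmod := foldr dsum zero_mod s.
Definition pow_mod (P : rmod) (k : nat) : rmod := dsum_list (nseq k P).

Definition Gen (P : rmod) : rmod -> Prop :=
  fun N => exists k (f : 'M[K]_(rdim (pow_mod P k), rdim N)),
    is_hom f /\ row_full f.

Definition projective (P : rmod) : Prop :=
  forall (M N : rmod) (p : 'M[K]_(rdim M, rdim N)) (g : 'M[K]_(rdim P, rdim N)),
    is_rmod M -> is_rmod N -> is_hom p -> row_full p -> is_hom g ->
    exists h : 'M[K]_(rdim P, rdim M), is_hom h /\ h *m p = g.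

Definition simple (S : rmod) : Prop :=
  [/\ is_rmod S, (0 < rdim S)%N
    & forall m (U : 'M[K]_(m, rdim S)),
        (forall a : L, (U *m ract S a <= U)%MS) ->
        (U == (0 : 'M[K]_(rdim S)))%MS \/ (U == (1%:M : 'M[K]_(rdim S)))%MS].

Definition proj_cover (P M : rmod) : Prop :=
  projective P /\
  exists p : 'M[K]_(rdim P, rdim M),
    [/\ is_hom p, row_full p
      & forall (X : rmod) (g : 'M[K]_(rdim X, rdim P)),
          is_rmod X -> is_hom g -> row_full (g *m p) -> row_full g].

(* the regular right module L_L (matrix of right multiplication
   v |-> v * a in a K-basis of L) *)
Definition reg_mod : rmod :=
  @RMod (\dim {:L}) (fun a => passmx.mxof (vbasis {:L}) (vbasis {:L}) (amulr a)).

Definition indecomposable (M : rmod) : Prop :=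
  [/\ is_rmod M, (0 < rdim M)%N
    & forall N1 N2, is_rmod N1 -> is_rmod N2 -> iso M (dsum N1 N2) ->
        rdim N1 = 0%N \/ rdim N2 = 0%N].

Definition basic_alg : Prop :=
  exists s : seq rmod,
    [/\ forall i, (i < size s)%N -> indecomposable (nth zero_mod s i),
        forall i j, (i < size s)%N -> (j < size s)%N -> i <> j ->
          ~ iso (nth zero_mod s i) (nth zero_mod s j)
      & iso reg_mod (dsum_list s)].

(* tau-tilting finiteness, via the finiteness of tors L
   (Demonet-Iyama-Jasso) *)
Definition tau_tilting_finite : Prop :=
  exists (n : nat) (F : nat -> rmod -> Prop),
    forall T, is_tors T -> exists i, (i < n)%N /\ cat_eq T (F i).

Definition nullc : rmod -> Prop := fun _ => False.

Definition atom_cond (A : seq (rmod -> Prop)) (U : rmod -> Prop) : Prop :=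
  [/\ is_tors U,
      forall i, (i < size A)%N -> subcat (nth nullc A i) U
    & forall B, is_atom B -> subcat B U ->
        exists i, (i < size A)%N /\ cat_eq B (nth nullc A i)].

Definition cond2 (A : seq (rmod -> Prop)) (T : rmod -> Prop) : Prop :=
  [/\ forall i, (i < size A)%N -> is_atom (nth nullc A i),
      atom_cond A T
    & forall U, atom_cond A U -> subcat U T].

Definition simple_cond (S : seq rmod) (U : rmod -> Prop) : Prop :=
  [/\ is_tors U,
      forall i, (i < size S)%N -> U (nth zero_mod S i)
    & forall M, simple M -> U M ->
        exists i, (i < size S)%N /\ iso M (nth zero_mod S i)].

Definition cond3 (S : seq rmod) (T : rmod -> Prop) : Prop :=
  [/\ forall i, (i < size S)%N -> simple (nth zero_mod S i),
      forall i j, (i < size S)%N -> (j < size S)%N -> i <> j ->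
        ~ iso (nth zero_mod S i) (nth zero_mod S j),
      simple_cond S T
    & forall U, simple_cond S U -> subcat U T].

End RightModules.

(* Main.v *)
From HB Require Import structures.
From mathcomp Require Import all_boot all_order all_algebra all_field.
Require Import Defs.
From Stdlib Require Import Classical ClassicalEpsilon.
From mathcomp Require Import zify.
Set Implicit Arguments. Unset Strict Implicit. Unset Printing Implicit Defensive.
Import GRing.Theory.
Local Open Scope ring_scope.

Lemma nat_min (P : nat -> Prop) : (exists n, P n) -> exists n, P n /\ forall m, P m -> (n <= m)%N.
Proof.
move=> [n Pn]; elim: n {-2}n (leqnn n) Pn => [|k IH] n.
  rewrite leqn0 => /eqP -> P0; exists 0%N; split => // m _.
move=> lenk Pn; case: (classic (exists m, (m < n)%N /\ P m)) => [[m [ltmn Pm]]|].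
  by apply: (IH m) => //; rewrite -ltnS (leq_trans ltmn).
move=> H; exists n; split => // m Pm; rewrite leqNgt; apply/negP => lt.
by apply: H; exists m.
Qed.

Lemma nat_max (P : nat -> Prop) b : (exists n, P n) -> (forall n, P n -> (n <= b)%N) ->
  exists n, P n /\ forall m, P m -> (m <= n)%N.
Proof.
move=> ex Hb.
have ex2 : exists k, exists n, P n /\ k = (b - n)%N.
  by case: ex => n Pn; exists (b - n)%N, n.
have [k [[n [Pn ek]] mk]] := nat_min ex2.
exists n; split => // m Pm.
have := mk (b - m)%N (ex_intro _ m (conj Pm erefl)).
rewrite ek => h. have := Hb _ Pm; have := Hb _ Pn. lia.
Qed.

Lemma choice_list (X : Type) (x0 : X) (m : nat) (P : nat -> X -> Prop) :
  (forall i, (i < m)%N -> exists x, P i x) ->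
  exists s : seq X, size s = m /\ forall i, (i < m)%N -> P i (nth x0 s i).
Proof.
elim: m => [|m IH] H; first by exists [::].
have [s [ss Hs]] : exists s : seq X, size s = m /\ forall i, (i < m)%N -> P i (nth x0 s i).
  by apply: IH => i lt; apply: H; rewrite ltnS ltnW.
have [x Px] := H m (ltnSn m).
exists (rcons s x); rewrite size_rcons ss; split => // i; rewrite ltnS leq_eqVlt.
case/orP => [/eqP ->|lt]; rewrite nth_rcons ss ?ltnn ?eqxx // lt; exact: Hs.
Qed.

Section Mods.
Variables (K : fieldType) (L : falgType K).
Local Notation rmod := (rmod L).

Definition stable (M : rmod) m (V : 'M[K]_(m, rdim M)) := forall a, (V *m ract M a <= V)%MS.

Lemma hom_comp (M N Q : rmod) f g : @is_hom _ _ M N f -> @is_hom _ _ N Q g -> @is_hom _ _ M Q (f *m g).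
Proof. by move=> hf hg a; rewrite mulmxA hf -mulmxA hg mulmxA. Qed.

Lemma hom_id (M : rmod) : @is_hom _ _ M M 1%:M.
Proof. by move=> a; rewrite mulmx1 mul1mx. Qed.

Lemma hom0 (M N : rmod) : @is_hom _ _ M N 0.
Proof. by move=> a; rewrite mulmx0 mul0mx. Qed.

Lemma hom_stable (M N : rmod) f : @is_hom _ _ M N f -> stable f.
Proof. by move=> hf a; rewrite -hf submxMl. Qed.

Lemma ker_stable (M N : rmod) f : @is_hom _ _ M N f -> stable (kermx f).
Proof. by move=> hf a; apply/sub_kermxP; rewrite -mulmxA hf mulmxA mulmx_ker mul0mx. Qed.

Lemma full_rinv m n (f : 'M[K]_(m, n)) : row_full f -> pinvmx f *m f = 1%:M.
Proof. by move=> ff; rewrite -{1}(mul1mx (pinvmx f)) mulmxKpV // sub1mx. Qed.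

Lemma free_linv m n (f : 'M[K]_(m, n)) : row_free f -> f *m pinvmx f = 1%:M.
Proof.
move=> ff; apply: (row_free_inj ff) => /=.
by rewrite mul1mx mulmxKpV.
Qed.

Lemma stableS (M : rmod) m n (V : 'M_(m, rdim M)) (W : 'M_(n, rdim M)) :
  stable W -> (V <= W)%MS -> forall a, (V *m ract M a <= W)%MS.
Proof. by move=> sW VW a; apply: submx_trans (sW a); apply: submxMr. Qed.

Lemma stable_adds (M : rmod) m n (V : 'M_(m, rdim M)) (W : 'M_(n, rdim M)) :
  stable V -> stable W -> stable (V + W)%MS.
Proof.
move=> sV sW a; rewrite addsmxMr addsmx_sub.
by rewrite (submx_trans (sV a)) ?addsmxSl // (submx_trans (sW a)) ?addsmxSr.
Qed.

Lemma mxaux m n (B : 'M[K]_(m, n)) (X Y : 'M_(n, n)) (C : 'M_(n, m)) :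
  B *m X *m C *m B = B *m X -> B *m (X *m Y) *m C = (B *m X *m C) *m (B *m Y *m C).
Proof. by move=> h; rewrite !mulmxA h. Qed.

Definition subm (M : rmod) m (V : 'M_(m, rdim M)) : rmod :=
  @RMod _ L (\rank V) (fun a => row_base V *m ract M a *m pinvmx (row_base V)).

Lemma rb_stable (M : rmod) m (V : 'M_(m, rdim M)) : stable V -> stable (row_base V).
Proof. by move=> sV a; rewrite !eq_row_base; apply: stableS => //; rewrite eq_row_base. Qed.

Lemma subm_hom (M : rmod) m (V : 'M_(m, rdim M)) : stable V ->
  @is_hom _ _ (subm V) M (row_base V).
Proof. by move=> sV a /=; rewrite mulmxKpV // rb_stable. Qed.

Lemma subm_rmod (M : rmod) m (V : 'M_(m, rdim M)) : is_rmod M -> stable V -> is_rmod (subm V).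
Proof.
case=> lin one mul sV; split => /= [k a b|| a b].
- by rewrite lin mulmxDr mulmxDl -scalemxAr -scalemxAl.
- by rewrite one mulmx1 free_linv // row_base_free.
- by rewrite mul mxaux // (mulmxKpV (rb_stable sV a)).
Qed.

Definition qmap (M : rmod) (W : 'M[K]_(rdim M)) := col_base (cokermx W).
Definition quot (M : rmod) (W : 'M[K]_(rdim M)) : rmod :=
  @RMod _ L (\rank (cokermx W)) (fun a => pinvmx (qmap W) *m ract M a *m qmap W).

Lemma qmap_full (M : rmod) (W : 'M_(rdim M)) : row_full (qmap W).
Proof. exact: col_base_full. Qed.

Lemma qmap_ker (M : rmod) (W : 'M_(rdim M)) m (A : 'M_(m, rdim M)) :
  (A *m qmap W == 0) = (A <= W)%MS.
Proof.
rewrite submxE; have e := mulmx_base (cokermx W).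
apply/eqP/eqP => [h|h].
  have -> : A *m cokermx W = A *m qmap W *m row_base (cokermx W) by rewrite -mulmxA /qmap e.
  by rewrite h mul0mx.
apply: (row_free_inj (row_base_free (cokermx W))); rewrite /= mul0mx /qmap -mulmxA e h //.
Qed.

Lemma qmap_aux (M : rmod) (W : 'M_(rdim M)) m (X : 'M_(m, rdim M)) :
  (X *m (qmap W *m pinvmx (qmap W) - 1%:M) <= W)%MS.
Proof.
by rewrite -qmap_ker -mulmxA mulmxBl mul1mx -mulmxA full_rinv ?qmap_full // mulmx1 subrr mulmx0.
Qed.

Lemma hom_aux n d (q : 'M[K]_(n, d)) (q' : 'M_(d, n)) (R : 'M_n) :
  (q *m q' - 1%:M) *m R *m q = 0 -> R *m q = q *m (q' *m R *m q).
Proof.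
move/eqP; rewrite mulmxBl mul1mx mulmxBl subr_eq0 => /eqP <-.
by rewrite !mulmxA.
Qed.

Lemma quot_hom (M : rmod) (W : 'M_(rdim M)) : stable W -> @is_hom _ _ M (quot W) (qmap W).
Proof.
move=> sW a /=; apply: hom_aux; apply/eqP; rewrite qmap_ker.
by apply: stableS => //; rewrite -[_ - _]mul1mx qmap_aux.
Qed.

Lemma mxaux2 n d (q : 'M[K]_(n, d)) (q' : 'M_(d, n)) (X Y : 'M_n) :
  Y *m q = q *m (q' *m Y *m q) -> q' *m (X *m Y) *m q = (q' *m X *m q) *m (q' *m Y *m q).
Proof. by move=> h; rewrite -[q' *m (X *m Y) *m q]mulmxA -[X *m Y *m q]mulmxA h !mulmxA. Qed.

Lemma quot_rmod (M : rmod) (W : 'M_(rdim M)) : is_rmod M -> stable W -> is_rmod (quot W).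
Proof.
move=> [lin one mul] sW; split => /= [k a b|| a b].
- by rewrite lin mulmxDr mulmxDl -scalemxAr -scalemxAl.
- by rewrite one mulmx1 full_rinv ?qmap_full.
- by rewrite mul mxaux2 // (quot_hom sW b).
Qed.

End Mods.

Section Simp.
Variables (K : fieldType) (L : falgType K).
Local Notation rmod := (rmod L).

Lemma iso_sym (M N : rmod) : iso M N -> iso N M.
Proof.
case=> f [hf ffr ffu]; exists (pinvmx f).
have e1 := full_rinv ffu; have e2 := free_linv ffr.
move: (pinvmx f) e1 e2 => g e1 e2.
split.
- move=> a; rewrite -[ract N a *m _]mul1mx -e1.
  have -> : g *m f *m (ract N a *m g) = g *m (f *m ract N a) *m g by rewrite !mulmxA.
  by rewrite -hf -!mulmxA e2 mulmx1.
- by apply/row_freeP; exists f.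
- by apply/row_fullP; exists f.
Qed.

Lemma tors_iso (T : rmod -> Prop) (M N : rmod) : is_tors T -> is_rmod M -> is_rmod N ->
  iso M N -> T M -> T N.
Proof. by case=> _ q _ rM rN [f [hf _ ff]] TM; apply: (q M N f). Qed.

Lemma full_nz m n (f : 'M[K]_(m, n)) : row_full f -> (0 < n)%N -> f != 0.
Proof.
move=> ff n0; apply/eqP => f0; move: ff; rewrite f0 /row_full mxrank0.
by rewrite eq_sym; move/eqP => e; rewrite e in n0.
Qed.

Lemma simple_hom_full (M S : rmod) (f : 'M_(rdim M, rdim S)) :
  simple S -> is_hom f -> f != 0 -> row_full f.
Proof.
case=> _ _ sS hf fn0; case: (sS _ f (hom_stable hf)) => /andP[e1 e2].
  by move: fn0; rewrite -submx0 e1.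
by rewrite -sub1mx.
Qed.

Lemma simple_hom_free (S N : rmod) (f : 'M_(rdim S, rdim N)) :
  simple S -> is_hom f -> f != 0 -> row_free f.
Proof.
case=> _ _ sS hf fn0; rewrite -kermx_eq0.
case: (sS _ _ (ker_stable hf)) => /andP[e1 e2]; first by rewrite -submx0.
move: fn0; have /sub_kermxP: (1%:M <= kermx f)%MS by [].
by rewrite mul1mx => ->; rewrite eqxx.
Qed.

Lemma schur (S1 S2 : rmod) (f : 'M_(rdim S1, rdim S2)) :
  simple S1 -> simple S2 -> is_hom f -> f != 0 -> iso S1 S2.
Proof.
by move=> s1 s2 hf fn0; exists f; split => //; [apply: simple_hom_free | apply: simple_hom_full].
Qed.

Definition perp (S : rmod) : rmod -> Prop :=
  fun M => forall f : 'M_(rdim M, rdim S), @is_hom _ _ M S f -> f = 0.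

Lemma factor_hom (Y Z N : rmod) (g : 'M_(rdim Y, rdim Z)) (h : 'M_(rdim Y, rdim N)) :
  is_hom g -> row_full g -> is_hom h -> kermx g *m h = 0 ->
  @is_hom _ _ Z N (pinvmx g *m h) /\ g *m (pinvmx g *m h) = h.
Proof.
move=> hg fg hh kh.
have e1 := full_rinv fg.
have e2 : g *m (pinvmx g *m h) = h.
  apply/eqP; rewrite mulmxA -subr_eq0 -{2}[h]mul1mx -mulmxBl.
  have /submxP[D ->] : (g *m pinvmx g - 1%:M <= kermx g)%MS.
    by apply/sub_kermxP; rewrite mulmxBl -mulmxA e1 mulmx1 mul1mx subrr.
  by rewrite -mulmxA kh mulmx0.
split => // a.
move: (pinvmx g) e1 e2 => g' e1 e2.
rewrite -mulmxA -hh -[X in ract Y a *m X]e2.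
have -> : g' *m (ract Y a *m (g *m (g' *m h))) = g' *m (ract Y a *m g) *m (g' *m h) by rewrite !mulmxA.
by rewrite hg (mulmxA g' g) e1 mul1mx.
Qed.

Lemma perp_tors (S : rmod) : is_tors (perp S).
Proof.
split.
- move=> M _ e f _; apply/eqP; rewrite -mxrank_eq0 -leqn0.
  by apply: leq_trans (rank_leq_row f) _; rewrite e.
- move=> M N f rM rN PM hf ff h hh.
  have := PM _ (hom_comp hf hh) => e.
  by rewrite -[h]mul1mx -(full_rinv ff) -mulmxA e mulmx0.
- move=> X Y Z f g rX rY rZ PX PZ [hf hg frf fug /andP[_ kf]] h hh.
  have fh := PX _ (hom_comp hf hh).
  have kh : kermx g *m h = 0.
    by case/submxP: kf => D ->; rewrite -mulmxA fh mulmx0.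
  have [h2 e] := factor_hom hg fug hh kh.
  by rewrite -e (PZ _ h2) mulmx0.
Qed.

Lemma perp_simple (S1 S2 : rmod) : simple S1 -> simple S2 -> ~ iso S1 S2 -> perp S2 S1.
Proof.
move=> s1 s2 ni f hf; apply/eqP; apply/negPn/negP => fn0; apply: ni.
exact: schur hf fn0.
Qed.

Lemma not_perp_self (S : rmod) : simple S -> ~ perp S S.
Proof.
case=> _ pos _ P; have := P _ (hom_id S) => /eqP; apply/negP.
by apply: full_nz => //; rewrite /row_full mxrank1.
Qed.

End Simp.

Section SQ.
Variables (K : fieldType) (L : falgType K).
Local Notation rmod := (rmod L).

Lemma max_sub (M : rmod) m (V : 'M_(m, rdim M)) : stable V -> ~~ row_full V ->
  exists W : 'M_(rdim M), [/\ stable W, (V <= W)%MS, ~~ row_full W &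
    forall W' : 'M_(rdim M), stable W' -> (W <= W')%MS -> ~~ row_full W' -> (W' <= W)%MS].
Proof.
move=> sV nfV.
pose P k := exists W : 'M_(rdim M), [/\ stable W, (V <= W)%MS, ~~ row_full W & \rank W = k].
have P0 : exists k, P k.
  exists (\rank V), <<V>>%MS; split.
  - by move=> a; rewrite (eqmxMr _ (genmxE V)) genmxE.
  - by rewrite genmxE.
  - by rewrite /row_full genmxE.
  - by rewrite genmxE.
have bnd : forall n, P n -> (n <= rdim M)%N.
  by move=> n [W [_ _ _ <-]]; apply: rank_leq_row.
have [k [[W [sW VW nfW rW]] mk]] := nat_max P0 bnd.
exists W; split => // W' sW' WW' nfW'.
have := mk (\rank W') (ex_intro _ W' (And4 sW' (submx_trans VW WW') nfW' erefl)).
rewrite -rW => le.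
have := mxrank_leqif_sup WW'; case => _ <-.
by apply/eqP; apply/anti_leq; rewrite le mxrankS.
Qed.

Lemma simple_of_max (M : rmod) (W : 'M_(rdim M)) d (q : 'M_(rdim M, d)) (q' : 'M_(d, rdim M))
  m' (U : 'M_(m', d)) : stable W ->
  (forall W' : 'M_(rdim M), stable W' -> (W <= W')%MS -> ~~ row_full W' -> (W' <= W)%MS) ->
  (forall m (A : 'M_(m, rdim M)), (A *m q == 0) = (A <= W)%MS) -> q' *m q = 1%:M ->
  (forall a, ract M a *m q = q *m (q' *m ract M a *m q)) ->
  (forall a, U *m (q' *m ract M a *m q) <= U)%MS ->
  (U == (0 : 'M[K]_d))%MS \/ (U == (1%:M : 'M[K]_d))%MS.
Proof.
move=> sW mW qk e1 hq sU.
have qa : forall m (X : 'M_(m, rdim M)), (X *m (q *m q' - 1%:M) <= W)%MS.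
  by move=> m X; rewrite -qk -mulmxA mulmxBl mul1mx -mulmxA e1 mulmx1 subrr mulmx0.
have sW' : stable (U *m q' + W)%MS.
  move=> a; rewrite addsmxMr addsmx_sub; apply/andP; split; last first.
    by apply: submx_trans (sW a) _; apply: addsmxSr.
  have -> : U *m q' *m ract M a = U *m (q' *m ract M a *m q) *m q' - U *m q' *m ract M a *m (q *m q' - 1%:M).
    rewrite mulmxBr mulmx1 opprB.
    have -> : U *m (q' *m ract M a *m q) *m q' = U *m q' *m ract M a *m (q *m q') by rewrite !mulmxA.
    by rewrite addrC subrK.
  apply: addmx_sub_adds; first by apply: submxMr; apply: sU.
  by rewrite eqmx_opp qa.
case: (boolP (row_full (U *m q' + W)%MS)) => [fW'|nfW'].
- right; apply/andP; split; first exact: submx1.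
  have : (1%:M *m q <= (U *m q' + W)%MS *m q)%MS by apply: submxMr; rewrite sub1mx.
  rewrite mul1mx addsmxMr.
  have -> : W *m q = 0 by apply/eqP; rewrite qk.
  rewrite -mulmxA e1 mulmx1 addsmx0 => h.
  by apply: submx_trans h; rewrite sub1mx; apply/row_fullP; exists q'.
- left; apply/andP; split; last exact: sub0mx.
  have := mW _ sW' (addsmxSr _ _) nfW'; rewrite addsmx_sub => /andP[h _].
  rewrite submx0; apply/eqP.
  have : U *m q' *m q = 0 by apply/eqP; rewrite qk.
  by rewrite -mulmxA e1 mulmx1.
Qed.

Lemma simple_quot (M : rmod) m (V : 'M_(m, rdim M)) : is_rmod M -> stable V -> ~~ row_full V ->
  exists Q : rmod, exists q : 'M_(rdim M, rdim Q),
    [/\ simple Q, is_hom q, row_full q & V *m q = 0].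
Proof.
move=> rM sV nfV.
have [W [sW VW nfW mW]] := max_sub sV nfV.
exists (quot W), (qmap W); split.
- split; first exact: quot_rmod.
  + rewrite /= mxrank_coker subn_gt0; move: nfW; rewrite /row_full.
    by have := rank_leq_col W; rewrite leq_eqVlt => /orP[->|].
  + move=> m' U sU; apply: (simple_of_max sW mW) => //.
    * by move=> m0 A; apply: qmap_ker.
    * by apply: full_rinv; apply: qmap_full.
    * exact: (quot_hom sW).
    * exact: sU.
- exact: quot_hom sW.
- exact: qmap_full.
- by apply/eqP; rewrite qmap_ker.
Qed.

End SQ.

Section GenS.
Variables (K : fieldType) (L : falgType K).
Local Notation rmod := (rmod L).

Lemma dsum_hom (M1 M2 N : rmod) (f : 'M_(rdim M1, rdim N)) (g : 'M_(rdim M2, rdim N)) :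
  is_hom f -> is_hom g -> @is_hom _ _ (dsum M1 M2) N (col_mx f g).
Proof.
move=> hf hg a /=; rewrite mul_block_col mul_col_mx !mul0mx addr0 add0r.
by rewrite hf hg.
Qed.

Lemma dsum_hom_inv (M1 M2 N : rmod) (f : 'M_(rdim M1, rdim N)) (g : 'M_(rdim M2, rdim N)) :
  @is_hom _ _ (dsum M1 M2) N (col_mx f g) -> is_hom f /\ is_hom g.
Proof.
move=> h; split => a; have := h a;
  rewrite /= mul_block_col mul_col_mx !mul0mx addr0 add0r => /eq_col_mx; case => //.
Qed.

Lemma dsum_rmod (M1 M2 : rmod) : is_rmod M1 -> is_rmod M2 -> is_rmod (dsum M1 M2).
Proof.
move=> [l1 o1 m1] [l2 o2 m2]; split => /= [k a b||a b].
- by rewrite l1 l2 scale_block_mx add_block_mx !scaler0 !addr0.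
- by rewrite o1 o2 -scalar_mx_block.
- by rewrite mulmx_block m1 m2 !mulmx0 !mul0mx !addr0 add0r.
Qed.

Lemma zero_rmod : is_rmod (zero_mod L).
Proof. by split => *; apply/matrixP => -[]. Qed.

Lemma pow_rmod (P : rmod) k : is_rmod P -> is_rmod (pow_mod P k).
Proof. by move=> rP; elim: k => [|k IH]; [exact: zero_rmod | exact: dsum_rmod]. Qed.

Lemma row_full_mul m n p (A : 'M[K]_(m, n)) (B : 'M_(n, p)) :
  row_full A -> row_full B -> row_full (A *m B).
Proof.
rewrite -!sub1mx => fA fB; apply: submx_trans fB _.
by rewrite -{1}[B]mul1mx submxMr.
Qed.

Lemma projective_dsum (P1 P2 : rmod) : projective P1 -> projective P2 -> projective (dsum P1 P2).
Proof.
move=> p1 p2 M N p g rM rN hp fp hg.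
rewrite -[g]vsubmxK in hg *; have [h1 h2] := dsum_hom_inv hg.
have [k1 [hk1 e1]] := p1 M N p _ rM rN hp fp h1.
have [k2 [hk2 e2]] := p2 M N p _ rM rN hp fp h2.
exists (col_mx k1 k2); split; first exact: dsum_hom.
by rewrite mul_col_mx e1 e2.
Qed.

Lemma projective_zero : projective (zero_mod L).
Proof.
move=> M N p g _ _ _ _ _; exists 0; split; first exact: hom0.
by apply/matrixP => -[].
Qed.

Lemma projective_pow (P : rmod) k : projective P -> projective (pow_mod P k).
Proof.
move=> pP; elim: k => [|k IH]; [exact: projective_zero | exact: projective_dsum].
Qed.

Lemma concat_gen (P N : rmod) j k (A : 'M_(rdim (pow_mod P j), rdim N))
    (B : 'M_(rdim (pow_mod P k), rdim N)) : is_hom A -> is_hom B ->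
  exists C : 'M_(rdim (pow_mod P (j + k)), rdim N), [/\ is_hom C, (A <= C)%MS & (B <= C)%MS].
Proof.
elim: j A => [|j IH] A hA hB.
  by exists B; split => //; rewrite (flatmx0 A) sub0mx.
move: A hA; rewrite /pow_mod /= -/(pow_mod P j) => A hA.
rewrite -[A]vsubmxK in hA *; have [h1 h2] := dsum_hom_inv hA.
have [C [hC s1 s2]] := IH _ h2 hB.
exists (col_mx (usubmx A) C); split.
- exact: dsum_hom.
- rewrite col_mx_sub -!addsmxE addsmxSl /=.
  by apply: submx_trans s1 _; rewrite addsmxSr.
- by apply: submx_trans s2 _; rewrite -addsmxE addsmxSr.
Qed.

Lemma gen_tors (P : rmod) : is_rmod P -> projective P -> is_tors (Gen P).
Proof.
move=> rP pP; split.
- move=> M rM e; exists 0%N, 0; split.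
    by move=> a; apply/matrixP => -[].
  by rewrite /row_full mxrank0 e.
- move=> M N f rM rN [k [F [hF fF]]] hf ff.
  exists k, (F *m f); split; [exact: hom_comp hf | exact: row_full_mul].
- move=> X Y Z f g rX rY rZ [j [FX [hFX fFX]]] [k [FZ [hFZ fFZ]]] [hf hg frf fug /andP[_ kf]].
  have [H [hH eH]] := (@projective_pow P k pP) Y Z g FZ rY rZ hg fug hFZ.
  have [C [hC s1 s2]] := concat_gen (hom_comp hFX hf) hH.
  exists (j + k)%N, C; split => //.
  rewrite -sub1mx.
  have : (g <= H *m g)%MS by rewrite eH; apply: submx_trans (submx1 _) _; rewrite sub1mx.
  case/submxP => D eD.
  have -> : (1%:M : 'M_(rdim Y)) = (1%:M - D *m H) + D *m H by rewrite subrK.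
  apply: addmx_sub; last by apply: submx_trans s2; apply: submxMl.
  apply: submx_trans s1.
  have : (1%:M - D *m H <= kermx g)%MS.
    by apply/sub_kermxP; rewrite mulmxBl mul1mx -mulmxA -eD subrr.
  move/submx_trans/(_ kf) => h; apply: submx_trans h _.
  by rewrite -{1}[f]mul1mx submxMr // sub1mx.
Qed.

Lemma gen_self (P : rmod) : Gen P P.
Proof.
exists 1%N, (col_mx 1%:M 0); split.
  by apply: dsum_hom; [exact: hom_id | exact: hom0].
by rewrite -sub1mx -addsmxE addsmxSl.
Qed.

Lemma gen_of_hom (P S : rmod) (h : 'M_(rdim P, rdim S)) :
  simple S -> is_hom h -> h != 0 -> Gen P S.
Proof.
move=> sS hh hn0; exists 1%N, (col_mx h 0); split.
  by apply: dsum_hom; [exact: hh | exact: hom0].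
rewrite -sub1mx -addsmxE; apply: submx_trans (addsmxSl _ _).
by rewrite sub1mx; apply: simple_hom_full.
Qed.

Lemma hom_of_gen (P Q : rmod) k (F : 'M_(rdim (pow_mod P k), rdim Q)) :
  is_hom F -> F != 0 -> exists h : 'M_(rdim P, rdim Q), is_hom h /\ h != 0.
Proof.
elim: k F => [|k IH] F hF; first by rewrite (flatmx0 F) eqxx.
move: F hF; rewrite /pow_mod /= -/(pow_mod P k) => F hF.
rewrite -[F]vsubmxK in hF *; have [h1 h2] := dsum_hom_inv hF.
case: (eqVneq (usubmx F) 0) => [e|ne]; last by exists (usubmx F).
rewrite e => n0; apply: (IH _ h2); apply: contraNneq n0 => ->.
by rewrite col_mx0.
Qed.

Lemma gen_simple (P S : rmod) : simple S ->
  (Gen P S <-> exists h : 'M_(rdim P, rdim S), is_hom h /\ h != 0).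
Proof.
move=> sS; split => [[k [F [hF fF]]]|[h [hh hn0]]]; last exact: gen_of_hom hh hn0.
apply: (hom_of_gen hF); apply: full_nz fF _; by case: sS.
Qed.

End GenS.

Section GenMax.
Variables (K : fieldType) (L : falgType K).
Local Notation rmod := (rmod L).

Lemma gen_max (P : rmod) (U : rmod -> Prop) : is_rmod P -> projective P -> is_tors U ->
  (forall S, simple S -> U S -> exists h : 'M_(rdim P, rdim S), is_hom h /\ h != 0) ->
  subcat U (Gen P).
Proof.
move=> rP pP tU H M rM UM.
pose Pr r := exists k (F : 'M_(rdim (pow_mod P k), rdim M)), is_hom F /\ \rank F = r.
have P0 : exists r, Pr r by exists 0%N, 0%N, 0; split; [exact: hom0 | exact: mxrank0].
have bnd : forall r, Pr r -> (r <= rdim M)%N by move=> r [k [F [_ <-]]]; apply: rank_leq_col.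
have [r [[k [F [hF rF]]] mr]] := nat_max P0 bnd.
case: (boolP (row_full F)) => [fF|nfF]; first by exists k, F.
have [Q [q [sQ hq fq Fq]]] := simple_quot rM (hom_stable hF) nfF.
have rQ : is_rmod Q by case: sQ.
have UQ : U Q by case: tU => _ tq _; apply: (tq M Q q).
have [s [hs sn0]] := H Q sQ UQ.
have [h [hh eh]] := pP M Q q s rM rQ hq fq hs.
have hC : @is_hom _ _ (pow_mod P k.+1) M (col_mx h F) by apply: dsum_hom.
have := mr _ (ex_intro _ k.+1 (ex_intro _ (col_mx h F) (conj hC erefl))).
rewrite -rF => le.
have FC : (F <= col_mx h F)%MS by rewrite -addsmxE addsmxSr.
have CF : (col_mx h F <= F)%MS.
  by have := mxrank_leqif_sup FC; case => _ <-; apply/eqP/anti_leq; rewrite le mxrankS.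
have : (h <= F)%MS by apply: submx_trans CF; rewrite -addsmxE addsmxSl.
case/submxP => D eD; move: sn0; rewrite -eh eD -mulmxA Fq mulmx0 eqxx //.
Qed.

End GenMax.

Lemma mx_ext (K : fieldType) m n (A B : 'M[K]_(m, n)) : (forall v : 'rV_m, v *m A = v *m B) -> A = B.
Proof. by move=> h; apply/row_matrixP => i; rewrite !rowE h. Qed.

Lemma mul_rV_fun (K : fieldType) n p (phi : 'rV[K]_n -> 'rV[K]_p) :
  (forall k x y, phi (k *: x + y) = k *: phi x + phi y) ->
  forall v, v *m (\matrix_i phi (delta_mx 0 i)) = phi v.
Proof.
move=> lin v.
have phi0 : phi 0 = 0.
  by have := lin (-1) 0 0; rewrite scaler0 addr0 scaleN1r addNr.
rewrite mulmx_sum_row {2}(row_sum_delta v).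
elim/big_rec2: _ => [|i y1 y2 _ ->]; first by rewrite phi0.
by rewrite rowK lin.
Qed.

Section Free.
Variables (K : fieldType) (L : falgType K).
Local Notation rmod := (rmod L).
Import VectorInternalTheory.

Local Notation n := (dim L).

Definition phia (a : L) (v : 'rV[K]_n) : 'rV[K]_n := v2r (r2v v * a).

Lemma phia_lin a : forall k x y, phia a (k *: x + y) = k *: phia a x + phia a y.
Proof. by move=> k x y; rewrite /phia linearP /= mulrDl -scalerAl linearP. Qed.

Definition fract (a : L) : 'M[K]_n := \matrix_i phia a (delta_mx 0 i).

Lemma fractE a v : v *m fract a = v2r (r2v v * a).
Proof. exact: (mul_rV_fun (phia_lin a)). Qed.

Definition freem : rmod := @RMod _ L n fract.

Lemma free_rmod : is_rmod freem.
Proof.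
split => /= [k a b||a b]; apply: mx_ext => v.
- by rewrite mulmxDr -scalemxAr !fractE mulrDr -scalerAr linearP.
- by rewrite mulmx1 fractE mulr1 r2vK.
- by rewrite mulmxA !fractE v2rK mulrA.
Qed.

Definition homv (M : rmod) (m : 'rV[K]_(rdim M)) : 'M[K]_(n, rdim M) :=
  \matrix_i (m *m ract M (r2v (delta_mx 0 i))).

Lemma homvE (M : rmod) (m : 'rV_(rdim M)) v : is_rmod M ->
  v *m homv m = m *m ract M (r2v v).
Proof.
move=> [lin _ _]; apply: (mul_rV_fun (phi := fun v => m *m ract M (r2v v))).
by move=> k x y; rewrite linearP /= lin mulmxDr -scalemxAr.
Qed.

Lemma homv_hom (M : rmod) (m : 'rV_(rdim M)) : is_rmod M -> @is_hom _ _ freem M (homv m).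
Proof.
move=> rM a; apply: mx_ext => v; rewrite /= mulmxA fractE homvE // v2rK.
by rewrite mulmxA homvE //; case: rM => _ _ ->; rewrite mulmxA.
Qed.

Lemma homv1 (M : rmod) (m : 'rV_(rdim M)) : is_rmod M -> v2r 1 *m homv m = m.
Proof. by move=> rM; rewrite homvE // v2rK; case: rM => _ -> _; rewrite mulmx1. Qed.

Lemma free_proj : projective freem.
Proof.
move=> M N p g rM rN hp fp hg.
pose nn := v2r (1 : L) *m g.
pose m := nn *m pinvmx p.
have em : m *m p = nn by rewrite /m mulmxKpV // (submx_trans (submx1 _)) // sub1mx.
exists (homv m); split; first exact: homv_hom.
apply: mx_ext => v; rewrite mulmxA homvE // -mulmxA hp mulmxA em /nn -mulmxA -hg /=.
by rewrite mulmxA fractE v2rK mul1r r2vK.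
Qed.

Lemma gen_free (M : rmod) : is_rmod M -> Gen freem M.
Proof.
move=> rM.
have tT : is_tors (fun _ : rmod => True) by split.
apply: (gen_max free_rmod free_proj tT) => // S [rS pos _] _.
have i : 'I_(rdim S) by case: (rdim S) pos => // k _; exact: ord0.
exists (homv (delta_mx 0 i)); split; first exact: homv_hom.
apply/eqP => e; have := homv1 (delta_mx 0 i) rS; rewrite e mulmx0 => /matrixP/(_ 0 i).
by rewrite !mxE !eqxx /= => /esym/eqP; rewrite oner_eq0.
Qed.

End Free.

Fixpoint mpow (K : fieldType) n (E : 'M[K]_n) k : 'M[K]_n :=
  if k is k'.+1 then mpow E k' *m E else 1%:M.

Lemma mpowD (K : fieldType) n (E : 'M[K]_n) a b : mpow E (a + b) = mpow E a *m mpow E b.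
Proof. by elim: b => [|b IH]; rewrite ?addn0 ?mulmx1 // addnS /= IH mulmxA. Qed.

Lemma mpow_fix (K : fieldType) n p (E : 'M[K]_n) (f : 'M_(n, p)) k : E *m f = f -> mpow E k *m f = f.
Proof. by move=> e; elim: k => [|k IH]; rewrite /= ?mul1mx // -mulmxA e. Qed.

Lemma inv_comm (K : fieldType) n (X Y : 'M[K]_n) : X \in unitmx -> Y *m X = X *m Y ->
  Y *m invmx X = invmx X *m Y.
Proof.
move=> uX e; have := congr1 (fun Z => invmx X *m Z *m invmx X) e.
by rewrite /= !mulmxA (mulVmx uX) mul1mx -!mulmxA (mulmxV uX) mulmx1.
Qed.

Section Cover.
Variables (K : fieldType) (L : falgType K).
Local Notation rmod := (rmod L).

Lemma mpow_hom (P : rmod) (E : 'M_(rdim P)) k : is_hom E -> @is_hom _ _ P P (mpow E k).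
Proof. by move=> hE; elim: k => [|k IH]; [exact: hom_id | exact: hom_comp]. Qed.

(* Fitting-type retraction *)
Lemma summand_proj (P : rmod) (F : 'M_(rdim P)) : is_rmod P -> projective P -> is_hom F ->
  \rank (F *m F) = \rank F -> projective (subm F).
Proof.
move=> rP pP hF rFF.
have sF := hom_stable hF.
set B := row_base F.
have BF : (B :=: F)%MS by exact: eq_row_base.
have hB : @is_hom _ _ (subm F) P B by exact: subm_hom.
set phi := B *m F *m pinvmx B.
have FB : (F <= B)%MS by rewrite BF.
have eFB : F *m pinvmx B *m B = F by rewrite mulmxKpV.
have BFB : B *m F *m pinvmx B *m B = B *m F.
  by rewrite mulmxKpV // (eqmxMr F BF) BF submxMl.
have uphi : phi \in unitmx.
  rewrite -row_free_unit /row_free eqn_leq rank_leq_row /=.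
  have e : \rank (B *m F) = \rank F by rewrite (eqmxMr F BF) rFF.
  rewrite -[X in (X <= _)%N]e -{1}BFB; exact: mxrankM_maxl.
have hphi : @is_hom _ _ (subm F) (subm F) phi.
  move=> a /=; rewrite /phi.
  have -> : B *m ract P a *m pinvmx B *m (B *m F *m pinvmx B) = B *m ract P a *m pinvmx B *m B *m F *m pinvmx B
    by rewrite !mulmxA.
  rewrite (mulmxKpV (rb_stable sF a)).
  have -> : B *m F *m pinvmx B *m (B *m ract P a *m pinvmx B) = B *m F *m pinvmx B *m B *m ract P a *m pinvmx B
    by rewrite !mulmxA.
  by rewrite BFB -!mulmxA (mulmxA (ract P a)) hF !mulmxA.
have hiphi : @is_hom _ _ (subm F) (subm F) (invmx phi).
  by move=> a; apply: inv_comm => //; apply: hphi.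
pose r := F *m pinvmx B *m invmx phi.
have hr : @is_hom _ _ P (subm F) r.
  have h1 : @is_hom _ _ P (subm F) (F *m pinvmx B).
    move=> a /=.
    have -> : F *m pinvmx B *m (B *m ract P a *m pinvmx B) = F *m pinvmx B *m B *m ract P a *m pinvmx B
      by rewrite !mulmxA.
    by rewrite eFB -hF mulmxA.
  exact: hom_comp h1 hiphi.
have Br : B *m r = 1%:M by rewrite /r (mulmxA B) (mulmxA B) -/phi (mulmxV uphi).
move=> M N p g rM rN hp fp hg.
have [h [hh eh]] := pP M N p (r *m g) rM rN hp fp (hom_comp hr hg).
exists (B *m h); split; first exact: hom_comp hB hh.
by rewrite -mulmxA eh mulmxA Br mul1mx.
Qed.

Lemma proj_cover_ex (M : rmod) : is_rmod M -> exists P, is_rmod P /\ proj_cover P M.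
Proof.
move=> rM.
pose Pr d := exists P (p : 'M_(rdim P, rdim M)),
  [/\ is_rmod P, projective P, is_hom p, row_full p & rdim P = d].
have P0 : exists d, Pr d.
  have [k [F [hF fF]]] := gen_free rM.
  exists (rdim (pow_mod (freem L) k)), (pow_mod (freem L) k), F; split => //.
    exact: pow_rmod (free_rmod L).
  exact: (@projective_pow K L (freem L) k (@free_proj K L)).
have [d [[P [p [rP pP hp fp eP]]] md]] := nat_min P0.
exists P; split => //; split => //; exists p; split => // X g rX hg fgp.
apply/negPn/negP => nfg.
have [h [hh eh]] := pP X M (g *m p) p rX rM (hom_comp hg hp) fgp hp.
pose E := h *m g.
have hE : is_hom E := hom_comp hh hg.
have Ep : E *m p = p by rewrite /E -mulmxA.
have rE : (\rank E < rdim P)%N.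
  rewrite ltn_neqAle rank_leq_row andbT; apply: contra nfg => /eqP e.
  by rewrite /row_full eqn_leq rank_leq_col /= -{1}e mxrankM_maxr.
pose Rk r := exists k, \rank (mpow E k) = r.
have [r [[k ek] mk]] := nat_min (ex_intro Rk _ (ex_intro _ 0%N erefl)).
set F := mpow E k in ek.
have hF : is_hom F by exact: mpow_hom.
have rFF : \rank (F *m F) = \rank F.
  apply/eqP; rewrite eqn_leq mxrankM_maxl /= ek; apply: mk; exists (k + k)%N.
  by rewrite mpowD.
have rF : (\rank F < rdim P)%N.
  apply: leq_ltn_trans rE; rewrite ek; apply: mk; exists 1%N; rewrite /= mul1mx //.
have sF := hom_stable hF.
have Fp : F *m p = p by apply: mpow_fix.
suff : Pr (\rank F) by move=> /md; rewrite -eP leqNgt rF.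
exists (subm F), (row_base F *m p); split => //.
- exact: subm_rmod.
- exact: summand_proj.
- exact: hom_comp (subm_hom sF) hp.
- rewrite -sub1mx; apply: submx_trans (_ : (p <= _)%MS); first by rewrite sub1mx.
  by rewrite -{1}Fp submxMr // eq_row_base.
Qed.

End Cover.

Section Atoms.
Variables (K : fieldType) (L : falgType K).
Local Notation rmod := (rmod L).

Definition Tcl (X : rmod) : rmod -> Prop := fun M => forall U, is_tors U -> U X -> U M.

Lemma Tcl_tors X : is_tors (Tcl X).
Proof.
split.
- by move=> M rM e U [z _ _] _; apply: z.
- move=> M N f rM rN TM hf ff U tU UX; have [_ q _] := tU.
  exact: (q M N f rM rN (TM U tU UX)).
- move=> X' Y Z f g rX rY rZ TX TZ ex U tU UX; have [_ _ e] := tU.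
  exact: (e X' Y Z f g rX rY rZ (TX U tU UX) (TZ U tU UX)).
Qed.

Lemma Tcl_in X : Tcl X X.
Proof. by move=> U _. Qed.

Lemma Tcl_min X U : is_tors U -> U X -> subcat (Tcl X) U.
Proof. by move=> tU UX M _ TM; apply: TM. Qed.

Lemma tors_simple (T : rmod -> Prop) (M : rmod) : is_tors T -> is_rmod M -> T M -> (0 < rdim M)%N ->
  exists Q, simple Q /\ T Q.
Proof.
move=> tT rM TM pos.
have s0 : stable (0 : 'M[K]_(rdim M)) by move=> a; rewrite mul0mx sub0mx.
have nf : ~~ row_full (0 : 'M[K]_(rdim M)).
  by rewrite /row_full mxrank0 eq_sym -lt0n pos.
have [Q [q [sQ hq fq _]]] := simple_quot rM s0 nf.
exists Q; split => //; case: tT => _ tq _; apply: (tq M Q q) => //; by case: sQ.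
Qed.

Lemma nonzero_simple (T : rmod -> Prop) : is_tors T -> ~ zero_cat T -> exists Q, simple Q /\ T Q.
Proof.
move=> tT nz; apply: NNPP => nQ; apply: nz => M rM TM.
apply: NNPP => n0; apply: nQ; apply: (tors_simple tT rM TM).
by rewrite lt0n; apply/eqP.
Qed.

Lemma Tcl_iso S Q : simple S -> simple Q -> Tcl S Q -> iso Q S.
Proof.
move=> sS sQ TQ; apply: iso_sym; apply: NNPP => ni.
have pS := perp_simple sS sQ ni.
have := Tcl_min (perp_tors Q) pS; move/(_ Q) => h.
by apply: (not_perp_self sQ); apply: h => //; case: sQ.
Qed.

Lemma atom_Tcl S : simple S -> is_atom (Tcl S).
Proof.
move=> sS; have [rS pos _] := sS; split.
- exact: Tcl_tors.
- move=> z; have := z S rS (@Tcl_in S) => e; by rewrite e in pos.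
- move=> T tT sub; case: (classic (zero_cat T)) => [|nz]; first by left.
  right; have [Q [sQ TQ]] := nonzero_simple tT nz.
  have rQ : is_rmod Q by case: sQ.
  have iQ := Tcl_iso sS sQ (sub Q rQ TQ).
  apply: Tcl_min => //; exact: tors_iso tT rQ rS iQ TQ.
Qed.

Lemma atom_simple B : is_atom B -> exists S, [/\ simple S, B S & cat_eq B (Tcl S)].
Proof.
case=> tB nz atm; have [Q [sQ BQ]] := nonzero_simple tB nz.
exists Q; split => //.
have sub := Tcl_min tB BQ.
case: (atm _ (@Tcl_tors Q) sub) => [z|h]; last by split.
by exfalso; have [rQ pos _] := sQ; have := z Q rQ (@Tcl_in Q) => e; rewrite e in pos.
Qed.

Lemma iso_Tcl S S' : simple S -> simple S' -> iso S S' -> cat_eq (Tcl S) (Tcl S').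
Proof.
move=> sS sS' i; have [rS _ _] := sS; have [rS' _ _] := sS'.
split; apply: Tcl_min; try exact: Tcl_tors.
- exact: tors_iso (@Tcl_tors S') rS' rS (iso_sym i) (@Tcl_in S').
- exact: tors_iso (@Tcl_tors S) rS rS' i (@Tcl_in S).
Qed.

Lemma Tcl_eq_iso S S' : simple S -> simple S' -> cat_eq (Tcl S) (Tcl S') -> iso S S'.
Proof.
move=> sS sS' [h _]; have [rS _ _] := sS.
exact: Tcl_iso sS' sS (h S rS (@Tcl_in S)).
Qed.

Lemma subcat_trans (T U V : rmod -> Prop) : subcat T U -> subcat U V -> subcat T V.
Proof. by move=> h1 h2 M rM TM; apply: h2 => //; apply: h1. Qed.

Definition good (T : rmod -> Prop) (s : seq rmod) :=
  [/\ forall i, (i < size s)%N -> simple (nth (zero_mod L) s i),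
      forall i j, (i < size s)%N -> (j < size s)%N -> i <> j ->
        ~ iso (nth (zero_mod L) s i) (nth (zero_mod L) s j)
    & forall i, (i < size s)%N -> T (nth (zero_mod L) s i)].

Lemma good_bound (T : rmod -> Prop) : tau_tilting_finite L ->
  exists n, forall s, good T s -> (size s <= n)%N.
Proof.
case=> n [Fs hF]; exists n => s [sim pw _].
have ex : forall i : 'I_(size s), exists j : 'I_n, cat_eq (Tcl (nth (zero_mod L) s i)) (Fs j).
  move=> i; have [j [lt e]] := hF _ (@Tcl_tors (nth (zero_mod L) s i)).
  by exists (Ordinal lt).
pose f i := proj1_sig (constructive_indefinite_description _ (ex i)).
have fP (i : 'I_(size s)) : cat_eq (Tcl (nth (zero_mod L) s i)) (Fs (f i)).
  exact: proj2_sig (constructive_indefinite_description _ (ex i)).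
have inj : injective f.
  move=> i i' e; apply/val_inj/eqP; apply: negbNE; apply/negP => /eqP ne.
  apply: (pw i i' (ltn_ord i) (ltn_ord i') ne).
  apply: Tcl_eq_iso; try apply: sim => //.
  have [a1 a2] := fP i; have [b1 b2] := fP i'; rewrite e in a1 a2.
  split; [exact: subcat_trans a1 b2 | exact: subcat_trans b1 a2].
by have := leq_card f inj; rewrite !card_ord.
Qed.

Lemma reps (T : rmod -> Prop) : tau_tilting_finite L ->
  exists s, good T s /\ forall M, simple M -> T M ->
    exists i, (i < size s)%N /\ iso M (nth (zero_mod L) s i).
Proof.
move=> ht; have [n bn] := good_bound T ht.
pose Pr k := exists s, good T s /\ size s = k.
have P0 : exists k, Pr k by exists 0%N, [::]; split => //; split.
have bnd : forall k, Pr k -> (k <= n)%N by move=> k' [s [g <-]]; apply: bn.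
have [k [[s [gs es]] mk]] := nat_max P0 bnd.
exists s; split => // M sM TM; apply: NNPP => nex.
suff : Pr (size s).+1 by move/mk; rewrite es ltnn.
exists (rcons s M); rewrite size_rcons; split => //.
have [sim pw Ts] := gs.
split.
- move=> i; rewrite size_rcons ltnS leq_eqVlt nth_rcons => /orP[/eqP ->|lt]; first by rewrite ltnn eqxx.
  by rewrite lt; apply: sim.
- move=> i j; rewrite size_rcons !ltnS !nth_rcons => li lj.
  move: li lj; rewrite [(i <= _)%N]leq_eqVlt [(j <= _)%N]leq_eqVlt.
  case/orP => [/eqP ei|li]; case/orP => [/eqP ej|lj] ne.
  + by case: ne; rewrite ei ej.
  + rewrite ei ltnn eqxx lj => ic; apply: nex; exists j; split => //.
  + rewrite ej ltnn eqxx li => ic; apply: nex; exists i; split => //; exact: iso_sym.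
  + by rewrite li lj; apply: pw.
- move=> i; rewrite size_rcons ltnS leq_eqVlt nth_rcons => /orP[/eqP ->|lt]; first by rewrite ltnn eqxx.
  by rewrite lt; apply: Ts.
Qed.

End Atoms.

Section Cond.
Variables (K : fieldType) (L : falgType K).
Local Notation rmod := (rmod L).
Local Notation z := (zero_mod L).

Lemma dsum_list_rmod (S : seq rmod) : (forall i, (i < size S)%N -> is_rmod (nth z S i)) ->
  is_rmod (dsum_list S).
Proof.
elim: S => [|X S IH] h; first exact: zero_rmod.
apply: dsum_rmod; first exact: (h 0%N).
by apply: IH => i lt; apply: (h i.+1).
Qed.

Lemma dsum_proj (S : seq rmod) i : (i < size S)%N ->
  exists pi : 'M_(rdim (dsum_list S), rdim (nth z S i)), is_hom pi /\ row_full pi.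
Proof.
elim: S i => [|X S IH] // [|i] lt /=.
  exists (col_mx 1%:M 0); split; first by apply: dsum_hom; [exact: hom_id | exact: hom0].
  by rewrite -sub1mx -addsmxE addsmxSl.
have [pi [hpi fpi]] := IH i lt.
exists (col_mx 0 pi); split; first by apply: dsum_hom; [exact: hom0 | exact: hpi].
by rewrite -sub1mx -addsmxE; apply: submx_trans (addsmxSr _ _); rewrite sub1mx.
Qed.

Lemma dsum_comp (S : seq rmod) (N : rmod) (h : 'M_(rdim (dsum_list S), rdim N)) :
  is_hom h -> h != 0 -> exists i, (i < size S)%N /\
    exists g : 'M_(rdim (nth z S i), rdim N), is_hom g /\ g != 0.
Proof.
elim: S h => [|X S IH] h hh; first by rewrite (flatmx0 h) eqxx.
move: h hh; rewrite /= -/(dsum_list S) => h hh.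
rewrite -[h]vsubmxK in hh *; have [h1 h2] := dsum_hom_inv hh.
case: (eqVneq (usubmx h) 0) => [e|ne]; last by move=> _; exists 0%N; split => //; exists (usubmx h).
rewrite e => n0; have [|i [lt hi]] := IH _ h2.
  by apply: contraNneq n0 => ->; rewrite col_mx0.
by exists i.+1; split.
Qed.

Lemma cover_cond (S : seq rmod) (P : rmod) :
  (forall i, (i < size S)%N -> simple (nth z S i)) -> is_rmod P -> proj_cover P (dsum_list S) ->
  simple_cond S (Gen P) /\ forall U, simple_cond S U -> subcat U (Gen P).
Proof.
move=> sim rP [pP [p [hp fp sup]]].
have rS : is_rmod (dsum_list S) by apply: dsum_list_rmod => i /sim [].
have surj : forall i, (i < size S)%N ->
    exists q : 'M_(rdim P, rdim (nth z S i)), is_hom q /\ row_full q.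
  move=> i lt; have [pi [hpi fpi]] := dsum_proj lt.
  by exists (p *m pi); split; [exact: hom_comp | exact: row_full_mul].
split; last first.
  move=> U [tU US cov]; apply: gen_max => // M sM UM.
  have [i [lt iM]] := cov M sM UM.
  have [q [hq fq]] := surj i lt.
  have [f [hf _ ff]] := iso_sym iM.
  exists (q *m f); split; first exact: hom_comp.
  by apply: full_nz; [exact: row_full_mul | case: sM].
split.
- exact: gen_tors.
- move=> i lt; have [q [hq fq]] := surj i lt.
  apply: (gen_of_hom (sim i lt) hq); apply: full_nz => //; by case: (sim i lt).
- move=> M sM GM; have [h [hh hn0]] := (gen_simple P sM).1 GM.
  have [rM _ _] := sM.
  case: (eqVneq (kermx p *m h) 0) => [k0|kn0].
    have [h2 e2] := factor_hom hp fp hh k0.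
    have n2 : pinvmx p *m h != 0 by apply: contraNneq hn0 => e; rewrite -e2 e mulmx0.
    have [i [lt [g [hg gn0]]]] := dsum_comp h2 n2.
    exists i; split => //; apply: iso_sym; exact: schur (sim i lt) sM hg gn0.
  exfalso; move: hn0; apply/negP; rewrite negbK.
  have sKp := ker_stable hp; have kp0 := mulmx_ker p.
  move: (kermx p) sKp kp0 kn0 => Kp sKp kp0 kn0.
  have sk : stable (Kp *m h).
    move=> a; rewrite -mulmxA -hh mulmxA; exact: (submxMr h (sKp a)).
  have [_ _ sMs] := sM.
  have full1 : (1%:M <= Kp *m h)%MS.
    case: (sMs _ _ sk) => /andP[e1 e2] //.
    by move: kn0; rewrite -submx0 e1.
  have : (h <= Kp *m h)%MS by apply: submx_trans full1; exact: submx1.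
  case/submxP => D eD.
  have sk2 := ker_stable hh.
  have hg := subm_hom sk2.
  have fg : row_full (row_base (kermx h) *m p).
    rewrite -sub1mx; apply: submx_trans (_ : (p <= _)%MS); first by rewrite sub1mx.
    have ep : p = (1%:M - D *m Kp) *m p by rewrite mulmxBl mul1mx -mulmxA kp0 mulmx0 subr0.
    rewrite {1}ep; apply: submxMr.
    rewrite eq_row_base; apply/sub_kermxP.
    by rewrite mulmxBl mul1mx -mulmxA -eD subrr.
  have := sup _ _ (subm_rmod rP sk2) hg fg.
  rewrite -sub1mx eq_row_base => /sub_kermxP; rewrite mul1mx => ->.
  by [].
Qed.

End Cond.

Section Main.
Variables (K : fieldType) (L : falgType K).
Local Notation rmod := (rmod L).
Local Notation z := (zero_mod L).

Lemma one_to_three (T : rmod -> Prop) (P : rmod) : tau_tilting_finite L -> is_tors T ->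
  is_rmod P -> projective P -> cat_eq T (Gen P) -> exists S, cond3 S T.
Proof.
move=> ht tT rP pP [TG GT].
have [S [[sim pw TS] cov]] := reps T ht.
exists S; split => //.
move=> U [tU US covU]; apply: subcat_trans GT.
apply: gen_max => // M sM UM.
have [j [lt iM]] := covU M sM UM.
have [rM _ _] := sM; have [rj _ _] := sim j lt.
apply/(gen_simple P sM).
apply (tors_iso (gen_tors rP pP) rj rM (iso_sym iM)).
exact: TG _ rj (TS j lt).
Qed.

Lemma three_to_one (T : rmod -> Prop) (S : seq rmod) : cond3 S T ->
  exists P, [/\ is_rmod P, projective P, cat_eq T (Gen P) & proj_cover P (dsum_list S)].
Proof.
move=> [sim pw sc mx].
have rS : is_rmod (dsum_list S) by apply: dsum_list_rmod => i /sim [].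
have [P [rP pc]] := proj_cover_ex rS.
have [scG mxG] := cover_cond sim rP pc.
exists P; split => //; first by case: pc.
split; [exact: mxG | exact: mx].
Qed.

Lemma three_to_two (T : rmod -> Prop) (S : seq rmod) : cond3 S T -> cond2 (map (@Tcl K L) S) T.
Proof.
move=> [sim pw [tT TS cov] mx].
have nthA : forall i, (i < size S)%N -> nth (@nullc K L) (map (@Tcl K L) S) i = Tcl (nth z S i).
  by move=> i lt; rewrite (nth_map z).
have ac : atom_cond (map (@Tcl K L) S) T.
  split => //; rewrite size_map.
  - by move=> i lt; rewrite nthA //; apply: Tcl_min => //; apply: TS.
  - move=> B aB sub; have [Q [sQ BQ [e1 e2]]] := atom_simple aB.
    have [rQ _ _] := sQ.
    have [i [lt iQ]] := cov Q sQ (sub Q rQ BQ).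
    exists i; split => //; rewrite nthA //.
    have [f1 f2] := iso_Tcl sQ (sim i lt) iQ.
    split; [exact: subcat_trans e1 f1 | exact: subcat_trans f2 e2].
split => //.
- by rewrite size_map => i lt; rewrite nthA //; apply: atom_Tcl; apply: sim.
- move=> U [tU AU atU]; apply: mx; split => //.
  + move=> i lt; have := AU i; rewrite size_map nthA // => h.
    have [ri _ _] := sim i lt; exact: (h lt _ ri (@Tcl_in _ _ _)).
  + move=> M sM UM; have [rM _ _] := sM.
    have [i [lt [e1 e2]]] := atU _ (atom_Tcl sM) (Tcl_min tU UM).
    move: lt e1 e2; rewrite size_map => lt; rewrite nthA // => e1 e2.
    exists i; split => //; apply: iso_sym; apply: Tcl_eq_iso (sim i lt) sM _.
    by split.
Qed.

Lemma two_to_three (T : rmod -> Prop) A : tau_tilting_finite L -> cond2 A T -> exists S, cond3 S T.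
Proof.
move=> ht [atA [tT AT atT] mx].
have [S [[sim pw TS] cov]] := reps T ht.
exists S; split => //.
move=> U [tU US covU]; apply: mx; split => //.
- move=> i lt; have [Q [sQ BQ [e1 e2]]] := atom_simple (atA i lt).
  have [rQ _ _] := sQ.
  have TQ : T Q by apply: (AT i lt).
  have [j [lj iQ]] := cov Q sQ TQ.
  have [rj _ _] := sim j lj.
  apply: subcat_trans e1 _; apply: Tcl_min => //.
  exact: tors_iso tU rj rQ (iso_sym iQ) (US j lj).
- move=> B aB sub; have [Q [sQ BQ [e1 e2]]] := atom_simple aB.
  have [rQ _ _] := sQ.
  have [j [lj iQ]] := covU Q sQ (sub Q rQ BQ).
  have [rj _ _] := sim j lj.
  have TQ : T Q := tors_iso tT rj rQ (iso_sym iQ) (TS j lj).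
  apply: atT => //; apply: subcat_trans e1 _; exact: Tcl_min.
Qed.

End Main.

Theorem proposition5p9 (K : fieldType) (L : falgType K) :
  basic_alg L -> tau_tilting_finite L ->
  forall T : rmod L -> Prop, is_tors T ->
  [/\ (exists P : rmod L, [/\ is_rmod P, projective P & cat_eq T (Gen P)])
        <-> (exists A, cond2 A T),
      (exists A, cond2 A T) <-> (exists S, cond3 S T),
      (forall S, cond3 S T ->
         exists P : rmod L, [/\ is_rmod P, cat_eq T (Gen P)
                              & proj_cover P (dsum_list S)])
    & (forall (P : rmod L) A S, is_rmod P -> projective P -> cat_eq T (Gen P) ->
         cond2 A T -> cond3 S T ->
         (rdim P = 0%N <-> (size A = 0%N /\ size S = 0%N)))].
Proof.
move=> _ ht T tT.
have e23 : (exists A, cond2 A T) <-> (exists S, cond3 S T).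
  split => [[A c]|[S c]]; [exact: two_to_three ht c | exists (map (@Tcl K L) S); exact: three_to_two].
split => //.
- split => [[P [rP pP e]]|/e23 [S c]].
    by apply/e23; exact: one_to_three ht tT rP pP e.
  by have [P [rP pP e _]] := three_to_one c; exists P.
- by move=> S c; have [P [rP _ e pc]] := three_to_one c; exists P.
- move=> P A S rP pP [TG GT] [atA [_ AT _] _] [sim _ [_ TS covS] _]; split.
  + move=> e0.
    have gz : forall M, is_rmod M -> T M -> rdim M = 0%N.
      move=> M rM TM; have [k [F [_ fF]]] := TG M rM TM.
      have : rdim (pow_mod P k) = 0%N by elim: k {F fF} => //= k ->; rewrite e0.
      move=> e; move: fF; rewrite /row_full => /eqP <-.
      by apply/eqP; rewrite -leqn0 -e rank_leq_row.
    split.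
    * case sA: (size A) => [//|n]; have lt : (0 < size A)%N by rewrite sA.
      have [_ nz _] := atA 0%N lt; exfalso; apply: nz => M rM BM.
      exact: gz M rM (AT 0%N lt M rM BM).
    * case sS: (size S) => [//|n]; have lt : (0 < size S)%N by rewrite sS.
      have [rS0 pos _] := sim 0%N lt.
      by rewrite (gz _ rS0 (TS 0%N lt)) in pos.
  + case=> _ s0; apply: NNPP => ne.
    have pos : (0 < rdim P)%N by rewrite lt0n; apply/eqP.
    have [Q [sQ TQ]] := tors_simple tT rP (GT P rP (gen_self P)) pos.
    by have [i [lt _]] := covS Q sQ TQ; rewrite s0 in lt.
Qed.
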